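(* Let $\mathcal{C}$ be a nonempty class of scoring rules, each of the form \[g(x,q)=\begin{cases}\int_x^q (v-x)\,d\lambda(v) & \text{if } x\le q,\\ \int_q^x (x-v)\,d\lambda(v) & \text{if } x>q,\end{cases}\] where $\lambda$ is a measure on $\mathbb{R}$ that is mutually absolutely continuous with Lebesgue measure and finite on every bounded interval (the measure $\lambda$ may differ between members of $\mathcal{C}$). Let $\{(X_i,B_i):i\in I\}$ be a collection of pairs, each consisting of a random variable $X_i$ and a nonempty event $B_i$, with conditional previsions (forecasts) $p_i=P(X_i\mid B_i)\in\mathbb{R}\cup\{\pm\infty\}$. Then the collection $\{p_i:i\in I\}$ is coherent$_1$ if and only if it is coherent$_3$ with respect to $\mathcal{C}$.
   Context: Let $\Omega$ be a nonempty set of states $\omega$; events are subsets of $\Omega$ and random variables are real-valued functions on $\Omega$. An event $B$ is identified with its indicator function, so $B(\omega)=1$ if $\omega\in B$ and $0$ otherwise. A conditional prevision $P(X\mid B)$ is an extended real number. Coherence$_1$: a collection $\{P(X_i\mid B_i):i\in I\}$ is coherent$_1$ if for every finite $\{i_1,\dots,i_n\}\subseteq I$, all real $\alpha_1,\dots,\alpha_n$ with $\alpha_j\ge 0$ whenever $P(X_{i_j}\mid B_{i_j})=+\infty$ and $\alpha_j\le 0$ whenever $P(X_{i_j}\mid B_{i_j})=-\infty$, and all real $c_1,\dots,c_n$ with $c_j=P(X_{i_j}\mid B_{i_j})$ whenever that prevision is finite, we have $\sup_\omega \sum_{j=1}^n \alpha_j B_{i_j}(\omega)[X_{i_j}(\omega)-c_j]\ge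 0$. Coherence$_3$ (with respect to a class $\mathcal{C}$ of scoring rules): forecasts $\{p_i:i\in I\}$ for the pairs $(X_i,B_i)$ are coherent$_3$ if for every finite $\{i_1,\dots,i_n\}\subseteq I$, every $g_1,\dots,g_n\in\mathcal{C}$, every set of real alternative forecasts $q_1,\dots,q_n$, and every choice of reals $c_1,\dots,c_n$ with $c_j=p_{i_j}$ when $p_{i_j}$ is finite and $c_j$ finite and lying between $q_j$ and $p_{i_j}$ when $p_{i_j}$ is infinite, we have \[\inf_\omega \sum_{j=1}^n B_{i_j}(\omega)\big[g_j(X_{i_j}(\omega),c_j)-g_j(X_{i_j}(\omega),q_j)\big]\le 0.\] *)

(* Defs.v *)
From HB Require Import structures.
From mathcomp Require Import all_boot all_order all_algebra.
From mathcomp Require Import all_classical all_reals all_analysis.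
Set Implicit Arguments. Unset Strict Implicit. Unset Printing Implicit Defensive.
Import Order.TTheory GRing.Theory Num.Theory.
Local Open Scope classical_set_scope.
Local Open Scope ring_scope.

Definition admissible_measure (R : realType)
  (lam : {measure set (measurableTypeR R) -> \bar R}) : Prop :=
  lam `<< (@lebesgue_measure R) /\ (@lebesgue_measure R) `<< lam /\
  (forall a b : R, (lam `[a, b]%classic < +oo)%E).

Definition score (R : realType)
  (lam : {measure set (measurableTypeR R) -> \bar R}) (x q : R) : R :=
  if x <= q then fine (\int[lam]_(v in `[x, q]%classic) (v - x)%:E)%E
  else fine (\int[lam]_(v in `[q, x]%classic) (x - v)%:E)%E.

Definition scoring_class (R : realType) (C : set (R -> R -> R)) : Prop :=
  forall g, C g -> exists lam, admissible_measure lam /\ g = score lam.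

(* Coherence_1 of {P(X_i | B_i) = p_i : i in I}.  A finite subset
   {i_1,...,i_n} of I is given by an injective map 'I_n -> I. *)
Definition coherent1 (R : realType) (I Omega : Type)
  (X : I -> Omega -> R) (B : I -> set Omega) (p : I -> \bar R) : Prop :=
  forall (n : nat) (ix : 'I_n -> I), injective ix ->
  forall alpha c : 'I_n -> R,
    (forall j, p (ix j) = +oo%E -> 0 <= alpha j) ->
    (forall j, p (ix j) = -oo%E -> alpha j <= 0) ->
    (forall j, p (ix j) \is a fin_num -> c j = fine (p (ix j))) ->
    (0 <= ereal_sup (range (fun w : Omega =>
       (\sum_(j < n) alpha j * \1_(B (ix j)) w * (X (ix j) w - c j))%:E)))%E.

(* Coherence_3 of forecasts {p_i} with respect to a class C of scoring
   rules. "c_j between q_j and p_{i_j}" (p infinite) is read inclusively. *)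
Definition coherent3 (R : realType) (I Omega : Type)
  (C : set (R -> R -> R))
  (X : I -> Omega -> R) (B : I -> set Omega) (p : I -> \bar R) : Prop :=
  forall (n : nat) (ix : 'I_n -> I), injective ix ->
  forall (g : 'I_n -> R -> R -> R) (q c : 'I_n -> R),
    (forall j, C (g j)) ->
    (forall j, p (ix j) \is a fin_num -> c j = fine (p (ix j))) ->
    (forall j, p (ix j) = +oo%E -> q j <= c j) ->
    (forall j, p (ix j) = -oo%E -> c j <= q j) ->
    (ereal_inf (range (fun w : Omega =>
       (\sum_(j < n) \1_(B (ix j)) w *
          (g j (X (ix j) w) (c j) - g j (X (ix j) w) (q j)))%:E)) <= 0)%E.

(* Main.v *)
Require Import Defs.
From HB Require Import structures.
From mathcomp Require Import all_boot all_order all_algebra.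
From mathcomp Require Import all_classical all_reals all_analysis.
From mathcomp Require Import ring lra measurable_realfun.
Import Order.TTheory GRing.Theory Num.Theory.
Import numFieldNormedType.Exports.
Import Num.Def.
Local Open Scope classical_set_scope.
Local Open Scope ring_scope.

Section lam.
Context (R : realType) (lam : {measure set (measurableTypeR R) -> \bar R})
  (Hlam : admissible_measure lam).
Local Notation T := (measurableTypeR R).

Lemma mitv (a b : R) : measurable (`[a, b] : set T).
Proof. exact: measurable_itv. Qed.

Lemma lam_set1 (a : R) : lam [set a] = 0%E.
Proof.
have h1 : (@lebesgue_measure R).-null_set [set a].
  by apply/measure0_null_setP => //; exact: lebesgue_measure_set1.
have := Hlam.1 _ h1.
by move/measure0_null_setP => ->.
Qed.

Lemma lam_fin (a b : R) : lam `[a, b]%classic \is a fin_num.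
Proof. by rewrite ge0_fin_numE //; case: Hlam => _ [_]; apply. Qed.

Lemma lam_pos (a b : R) : a < b -> (0 < lam `[a, b]%classic)%E.
Proof.
move=> ab; rewrite lt0e measure_ge0 andbT; apply/negP => /eqP h0.
have : lam.-null_set `[a, b]%classic by apply/measure0_null_setP => //; exact: mitv.
move/(Hlam.2.1) => /measure0_null_setP => /(_ (mitv a b)).
rewrite /= => hh; move: hh; rewrite lebesgue_measure_itv /= lte_fin ab => /eqP; rewrite eqe subr_eq0.
by move/eqP => ba; move: ab; rewrite ba ltxx.
Qed.


Lemma int_split (f : T -> \bar R) (mf : measurable_fun [set: T] f) (a b c : R) :
  a <= b -> b <= c ->
  (\int[lam]_(v in `[a, c]%classic) f v =
   \int[lam]_(v in `[a, b]%classic) f v + \int[lam]_(v in `[b, c]%classic) f v)%E.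
Proof.
move=> ab bc.
have -> : (`[a, c]%classic : set T) = `[a, b]%classic `|` `]b, c]%classic.
  by apply: itv_bndbnd_setU; rewrite bnd_simp.
rewrite integral_setU //; last first.
- by apply/disj_setPS => x [] /=; rewrite !in_itv /= => /andP[_ h1] /andP[h2 _]; lra.
- exact: (measurable_funTS mf).
congr (_ + _)%E.
have -> : (`[b, c]%classic : set T) = [set b] `|` `]b, c]%classic.
  by rewrite setU1itv // bnd_simp.
rewrite integral_setU //; last first.
- by apply/disj_setPS => x [] /= ->; rewrite !in_itv /= ltxx.
- exact: (measurable_funTS mf).
rewrite [in RHS]null_set_integral ?add0e //; first exact: (measurable_funTS mf).
exact: lam_set1.
Qed.

Lemma lam_split (a b c : R) : a <= b -> b <= c ->
  lam `[a, c]%classic = (lam `[a, b]%classic + lam `[b, c]%classic)%E.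
Proof.
move=> ab bc.
have mc : measurable_fun [set: T] (cst 1%E : T -> \bar R) by exact: measurable_cst.
have := @int_split (cst 1%E) mc a b c ab bc.
by rewrite !integral_cst ?mul1e //; exact: measurable_itv.
Qed.

Lemma lin_int (a b s r : R) :
  lam.-integrable `[a, b]%classic (fun v : T => (s * v + r)%:E).
Proof.
apply: (measurable_bounded_integrable (f := fun v : T => s * v + r)).
- exact: measurable_itv.
- by rewrite -ge0_fin_numE //; exact: lam_fin.
- apply: measurable_funD => //; apply: measurable_funM => //; exact: measurable_id.
exists (`|s| * (`|a| + `|b|) + `|r|); split => // M hM v /= /[!in_itv] /= /andP[av vb].
apply: le_trans (ltW hM).
have h1 := ler_norm a; have h2 := ler_norm b; have h3 := ler_norm (- a).
have h4 := ler_norm (- b).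
rewrite normrN in h3; rewrite normrN in h4.
have hv : `|v| <= `|a| + `|b| by rewrite ler_norml; apply/andP; split; lra.
rewrite (le_trans (ler_normD _ _)) // lerD2r normrM.
by apply: ler_wpM2l.
Qed.

Lemma int_eq a b (f g : T -> \bar R) : (forall v, f v = g v) ->
  lam.-integrable `[a, b]%classic f -> lam.-integrable `[a, b]%classic g.
Proof. by move=> fg; apply: eq_integrable; [exact: mitv | move=> v _]. Qed.
Arguments int_eq {a b f g}.

Definition Lm (a b : R) := fine (lam `[a, b]%classic).
Definition Ix (a b x : R) := fine (\int[lam]_(v in `[a, b]%classic) (v - x)%:E)%E.

Lemma Lm_E a b : (Lm a b)%:E = lam `[a, b]%classic.
Proof. by rewrite fineK //; exact: lam_fin. Qed.

Lemma Lm_ge0 a b : 0 <= Lm a b.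
Proof. by rewrite -lee_fin Lm_E measure_ge0. Qed.

Lemma aff_int a b x : lam.-integrable `[a, b]%classic (fun v : T => (v - x)%:E).
Proof.
refine (int_eq _ (lin_int a b 1 (- x))) => v /=.
by rewrite mul1r.
Qed.

Lemma Ix_E a b x : (Ix a b x)%:E = (\int[lam]_(v in `[a, b]%classic) (v - x)%:E)%E.
Proof. by rewrite fineK //; apply: integrable_fin_num; [exact: measurable_itv|exact: aff_int]. Qed.

Lemma maff x : measurable_fun [set: T] (fun v : T => (v - x)%:E).
Proof. by apply/measurable_EFinP; apply: measurable_funB => //; exact: measurable_id. Qed.

Lemma Ix_split a b c x : a <= b -> b <= c -> Ix a c x = Ix a b x + Ix b c x.
Proof.
move=> ab bc; apply: EFin_inj; rewrite EFinD !Ix_E.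
exact: int_split (maff x) _ _ _ ab bc.
Qed.

Lemma Lm_split a b c : a <= b -> b <= c -> Lm a c = Lm a b + Lm b c.
Proof. by move=> ab bc; apply: EFin_inj; rewrite EFinD !Lm_E; exact: lam_split. Qed.

Lemma Ix_shift a b x y : Ix a b x = Ix a b y + (y - x) * Lm a b.
Proof.
apply: EFin_inj; rewrite EFinD EFinM Lm_E !Ix_E -integral_cst; last exact: measurable_itv.
rewrite -integralD_EFin; [|exact: measurable_itv|exact: aff_int|].
  by apply: eq_integral => v _ /=; congr EFin; ring.
refine (int_eq _ (lin_int a b 0 (y - x))) => v /=.
by rewrite mul0r add0r.
Qed.

Lemma Ix_le a b x : Ix a b x <= (b - x) * Lm a b.
Proof.
rewrite -lee_fin EFinM Lm_E Ix_E -integral_cst; last exact: measurable_itv.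
apply: le_integral; [exact: measurable_itv|exact: aff_int| |].
  refine (int_eq _ (lin_int a b 0 (b - x))) => v /=.
  by rewrite mul0r add0r.
move=> v; rewrite inE /= in_itv /= => /andP[av vb]; rewrite lee_fin; lra.
Qed.

Lemma Ix_ge a b x : (a - x) * Lm a b <= Ix a b x.
Proof.
rewrite -lee_fin EFinM Lm_E Ix_E -integral_cst; last exact: measurable_itv.
apply: le_integral; [exact: measurable_itv| |exact: aff_int|].
  refine (int_eq _ (lin_int a b 0 (a - x))) => v /=.
  by rewrite mul0r add0r.
move=> v; rewrite inE /= in_itv /= => /andP[av vb]; rewrite lee_fin; lra.
Qed.

Lemma Ix_neg a b x :
  fine (\int[lam]_(v in `[a, b]%classic) (x - v)%:E)%E = - Ix a b x.
Proof.
have i1 : lam.-integrable `[a, b]%classic (fun v : T => (x - v)%:E).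
  refine (int_eq _ (lin_int a b (-1) x)) => v /=.
  by congr EFin; ring.
have h0 : (\int[lam]_(v in `[a, b]%classic) (x - v)%:E +
   \int[lam]_(v in `[a, b]%classic) (v - x)%:E = 0)%E.
  rewrite -integralD_EFin; [|exact: measurable_itv|exact: i1|exact: aff_int].
  rewrite -(integral0 lam `[a, b]%classic); apply: eq_integral => v _ /=.
  by congr EFin; ring.
have := congr1 fine h0; rewrite fineD; last 2 first.
- by apply: integrable_fin_num; [exact: measurable_itv|exact: i1].
- by apply: integrable_fin_num; [exact: measurable_itv|exact: aff_int].
rewrite /Ix /= => h; lra.
Qed.


Lemma score_le x q : x <= q -> score lam x q = Ix x q x.
Proof. by move=> xq; rewrite /score xq. Qed.
Arguments score_le {x q}.

Lemma score_gt x q : q < x -> score lam x q = - Ix q x x.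
Proof. by move=> qx; rewrite /score leNgt qx /= Ix_neg. Qed.
Arguments score_gt {x q}.

Lemma score_diff_le q c x : q <= c -> score lam x c - score lam x q = Ix q c x.
Proof.
move=> qc.
case: (lerP x c) => xc; case: (lerP x q) => xq;
  rewrite ?(score_le xc) ?(score_le xq) ?(score_gt xc) ?(score_gt xq).
- by rewrite (Ix_split x q c x xq qc); ring.

- by rewrite (Ix_split q x c x (ltW xq) xc); ring.
- lra.
- by rewrite (Ix_split q c x x qc (ltW xc)); ring.
Qed.

Lemma score_diff_gt q c x : c < q -> score lam x c - score lam x q = - Ix c q x.
Proof.
move=> cq; rewrite -(score_diff_le c q x (ltW cq)); ring.
Qed.


Lemma Lm_mono a s t : s <= t -> Lm a s <= Lm a t.
Proof.
move=> st; rewrite -lee_fin !Lm_E; apply: le_measure; rewrite ?inE; try exact: measurable_itv.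
by move=> x /=; rewrite !in_itv /= => /andP[ax xs]; rewrite ax /=; lra.
Qed.

Arguments Lm_mono a {s t}.

Lemma Lm_aa a : Lm a a = 0.
Proof. by rewrite /Lm set_itv1 lam_set1. Qed.

Lemma Lm_lt a s : s < a -> Lm a s = 0.
Proof.
move=> sa; rewrite /Lm set_itv_ge ?measure0 //.
by rewrite bnd_simp -ltNge.
Qed.

Lemma inv_le (n m : nat) : (n <= m)%N -> m.+1%:R^-1 <= n.+1%:R^-1 :> R.
Proof. by move=> nm; rewrite lef_pV2 ?posrE ?ltr0Sn // ler_nat ltnS. Qed.

Lemma inv_gt0 (n : nat) : 0 < n.+1%:R^-1 :> R.
Proof. by rewrite invr_gt0 ltr0Sn. Qed.

Lemma Lm_right a s e : 0 < e -> exists2 d, 0 < d & Lm a (s + d) < Lm a s + e.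
Proof.
move=> e0.
pose A n := (`[a, s + n.+1%:R^-1]%classic : set T).
have mA n : measurable (A n) by exact: measurable_itv.
have dec : nonincreasing_seq A.
  move=> n m nm; apply/subsetPset => x; rewrite /A /= !in_itv /= => /andP[ax xs].
  by rewrite ax /=; apply: le_trans xs _; rewrite lerD2l inv_le.
have cap : \bigcap_n A n = `[a, s]%classic.
  apply/seteqP; split => x /=.
    move=> h; have := h 0%N I; rewrite /A /= !in_itv /= => /andP[ax _]; rewrite ax /=.
    rewrite leNgt; apply/negP => /ltr_add_invr [k hk].
    by have := h k I; rewrite /A /= in_itv /= => /andP[_] xk; have := lt_le_trans hk xk; rewrite ltxx.
  rewrite in_itv /= => /andP[ax xs] n _; rewrite /A /= in_itv /= ax /=.
  by apply: le_trans xs _; rewrite lerDl ltW // inv_gt0.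
have := nonincreasing_cvg_mu (Hlam.2.2 _ _) mA (bigcapT_measurable mA) dec.
rewrite cap -Lm_E => /fine_cvgP [_] /cvgrPdist_lt /(_ e e0) [N _ HN].
have := HN N (leqnn N); rewrite /= -/(Lm _ _) => hN.
exists N.+1%:R^-1; first exact: inv_gt0.
move: hN; rewrite ltr_norml => /andP[h1 h2]; lra.
Qed.


Lemma Lm_left a s e : 0 < e -> exists2 d, 0 < d & Lm a s - e < Lm a (s - d).
Proof.
move=> e0; case: (ltP a s) => [asl|sa]; last first.
  exists 1 => //.
  have -> : Lm a s = 0.
    by move: sa; rewrite le_eqVlt => /orP[/eqP ->|/Lm_lt //]; exact: Lm_aa.
  by have := Lm_ge0 a (s - 1); lra.
pose A n := (`[a, s - n.+1%:R^-1]%classic : set T).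
have mA n : measurable (A n) by exact: measurable_itv.
have inc : nondecreasing_seq A.
  move=> n m nm; apply/subsetPset => x; rewrite /A /= !in_itv /= => /andP[ax xs].
  by rewrite ax /=; apply: le_trans xs _; rewrite lerD2l lerN2 inv_le.
have cup : \bigcup_n A n = `[a, s[%classic.
  apply/seteqP; split => x /=.
    case=> n _; rewrite /A /= !in_itv /= => /andP[ax xs]; rewrite ax /=.
    by apply: le_lt_trans xs _; rewrite ltrBlDr ltrDl inv_gt0.
  rewrite in_itv /= => /andP[ax /ltr_add_invr [k hk]].
  exists k => //; rewrite /A /= in_itv /= ax /=.
  by rewrite lerBrDr ltW.
have := nondecreasing_cvg_mu (mu := lam) mA (bigcup_measurable (fun k _ => mA k)) inc.
rewrite cup.
have -> : lam `[a, s[%classic = (Lm a s)%:E.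
  rewrite Lm_E -(@setUitv1 _ _ _ _ true); last by rewrite bnd_simp ltW.
  rewrite measureU //; first by rewrite [X in (_ + X)%E](_ : _ = 0%E); [rewrite adde0 | exact: (lam_set1 s)].
  apply/seteqP; split => x //=; rewrite in_itv /= => -[/andP[_ h] hx]; by rewrite hx ltxx in h.
move=> /fine_cvgP [_] /cvgrPdist_lt /(_ e e0) [N _ HN].
have := HN N (leqnn N); rewrite /= -/(Lm _ _) => hN.
exists N.+1%:R^-1; first exact: inv_gt0.
move: hN; rewrite ltr_norml => /andP[h1 h2]; lra.
Qed.


Lemma Lm_cont a : continuous (Lm a).
Proof.
move=> s; apply/cvgrPdist_lt => e e0.
have e20 : 0 < e / 2 by rewrite divr_gt0.
have [d1 d10 h1] := Lm_right a s (e/2) e20.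
have [d2 d20 h2] := Lm_left a s (e/2) e20.
apply/nbhs_ballP; exists (minr d1 d2) => /=; first by rewrite lt_min d10 d20.
move=> t; rewrite /ball /= lt_min => /andP[t1 t2].
move: t1 t2; rewrite ltr_norml => /andP[t1 t1'] /[!ltr_norml] /andP[t2 t2'].
case: (lerP s t) => st.
- have m1 := Lm_mono a st.
  have m2 : Lm a t <= Lm a (s + d1) by apply: Lm_mono; lra.
  apply/andP; split; lra.
- have m1 := Lm_mono a (ltW st).
  have m2 : Lm a (s - d2) <= Lm a t by apply: Lm_mono; lra.
  apply/andP; split; lra.
Qed.

Lemma ivt_up a v L : a <= L -> 0 <= v <= Lm a L ->
  exists2 q, a <= q <= L & Lm a q = v.
Proof.
move=> aL hv.
have hc : {within `[a, L], continuous (Lm a)}.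
  by apply: continuous_subspaceT; exact: Lm_cont.
have hv' : minr (Lm a a) (Lm a L) <= v <= maxr (Lm a a) (Lm a L).
  by rewrite Lm_aa min_l ?max_r ?Lm_ge0.
have [q hq fq] := IVT aL hc hv'.
by exists q => //; move: hq; rewrite in_itv.
Qed.


Lemma exists_q (c alpha t e : R) : 0 < e -> 0 <= t ->
  t * `|alpha| <= Lm c (c + e) -> t * `|alpha| <= Lm (c - e) c ->
  exists q, [/\ (0 <= alpha -> q <= c), (alpha <= 0 -> c <= q) &
   forall x, - (e * (t * `|alpha|)) - t * alpha * (x - c) <=
             score lam x c - score lam x q].
Proof.
move=> e0 t0 hR hL.
have v0 : 0 <= t * `|alpha| by rewrite mulr_ge0.
case: (ltgtP 0 alpha) => ha.
- have hv : 0 <= Lm (c - e) c - t * `|alpha| <= Lm (c - e) c.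
    by apply/andP; split; lra.
  have ce : c - e <= c by lra.
  have [q /andP[q1 q2] fq] := ivt_up _ _ _ ce hv.
  have Lq : Lm q c = t * `|alpha|.
    by have := Lm_split _ _ _ q1 q2; lra.
  exists q; split => //.
  move=> x; rewrite score_diff_le // (Ix_shift q c x c) Lq.
  have := Ix_ge q c c; rewrite Lq => h.
  rewrite gtr0_norm // in v0 h Lq *.
  have : 0 <= (q - (c - e)) * (t * alpha) by rewrite mulr_ge0 ?subr_ge0.
  nra.
- have hv : 0 <= t * `|alpha| <= Lm c (c + e) by apply/andP; split.
  have ce : c <= c + e by lra.
  have [q /andP[q1 q2] fq] := ivt_up _ _ _ ce hv.
  exists q; split => //.
  move=> x.
  have -> : score lam x c - score lam x q = - (score lam x q - score lam x c) by ring.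
  rewrite score_diff_le // (Ix_shift c q x c) fq.
  have := Ix_le c q c; rewrite fq => h.
  rewrite ltr0_norm // in v0 h fq *.
  have : 0 <= ((c + e) - q) * (t * - alpha) by rewrite mulr_ge0 ?subr_ge0 // oppr_ge0 ltW.
  nra.
- exists c; split => //; move=> x; rewrite -ha subrr normr0; lra.
Qed.


Lemma Lm_gt0 a b : a < b -> 0 < Lm a b.
Proof. by move=> ab; rewrite -lte_fin Lm_E; exact: lam_pos. Qed.

End lam.
Arguments Lm {R} lam a b.
Arguments Ix {R} lam a b x.
Theorem theorem4p1 (R : realType) (I Omega : Type) (w0 : Omega)
  (C : set (R -> R -> R)) (HC : scoring_class C) (HCne : C !=set0)
  (X : I -> Omega -> R) (B : I -> set Omega) (HB : forall i, B i !=set0)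
  (p : I -> \bar R) :
  coherent1 X B p <-> coherent3 C X B p.
Proof.
split.
- move=> H1 n ix ixinj g q c HCg Hfin Hpinf Hninf.
  have [lamf Hl] := boolp.choice (fun j => HC _ (HCg j)).
  pose a j := if q j <= c j then Lm (lamf j) (q j) (c j) else - Lm (lamf j) (c j) (q j).
  have Hd j x : g j x (c j) - g j x (q j) <= a j * (c j - x).
    case: (Hl j) => Ha ->; rewrite /a; case: ifPn => [qc|]; last rewrite -ltNge => cq.
    + rewrite (@score_diff_le _ _ Ha) //; have := @Ix_le _ _ Ha (q j) (c j) x; lra.
    + rewrite (@score_diff_gt _ _ Ha) //; have := @Ix_ge _ _ Ha (c j) (q j) x; lra.
  have Ha1 j : p (ix j) = +oo%E -> 0 <= a j.
    move=> /Hpinf qc; rewrite /a qc /=; case: (Hl j) => Ha _; exact: (@Lm_ge0 _ _ Ha).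
  have Ha2 j : p (ix j) = -oo%E -> a j <= 0.
    move=> /Hninf cq; rewrite /a; case: ifPn => qc.
      have -> : q j = c j by apply/eqP; rewrite eq_le qc cq.
      by case: (Hl j) => Ha _; rewrite (@Lm_aa _ _ Ha).
    by rewrite oppr_le0; case: (Hl j) => Ha _; exact: (@Lm_ge0 _ _ Ha).
  have := H1 n ix ixinj a c Ha1 Ha2 Hfin.
  set S1 := ereal_sup _; set S3 := ereal_inf _ => hS1.
  rewrite leNgt; apply/negP => hS3.
  have : (S1 <= - S3)%E.
    apply: ge_ereal_sup => _ [w _ <-].
    rewrite leeNr; apply: le_trans (ereal_inf_lbound _) _; first by exists w.
    rewrite lee_fin -sumrN; apply: ler_sum => j _.
    have h0 : 0 <= \1_(B (ix j)) w :> R by rewrite indicE ler0n.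
    have := Hd j (X (ix j) w); nra.
  move: hS1 hS3; case: S3 => [r| |] //= h1 h2 h3.
  - have := le_trans h1 h3; rewrite lee_fin; move: h2; rewrite lte_fin; lra.
  - by move: (le_trans h1 h3).
- move=> H3 n ix ixinj alpha c Hp Hn Hfin.
  set S1 := ereal_sup _.
  have ub w : ((\sum_(j < n) alpha j * \1_(B (ix j)) w * (X (ix j) w - c j))%:E <= S1)%E.
    by apply: ereal_sup_ubound; exists w.
  rewrite leNgt; apply/negP => hS.
  have [r Sr] : exists r, S1 = r%:E.
    move: hS (ub w0); case E: S1 => [r| |] // _; first by exists r.
  rewrite Sr lte_fin in hS.
  have ubr w : \sum_(j < n) alpha j * \1_(B (ix j)) w * (X (ix j) w - c j) <= r.
    by rewrite -lee_fin -Sr; exact: ub.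
  pose d := - r.
  have d0 : 0 < d by rewrite /d oppr_gt0.
  case: HCne => g0 Cg0; have [lam [Hlam Hg0]] := HC _ Cg0.
  pose K := \sum_(j < n) `|alpha j| + 1.
  have SK : 0 <= \sum_(j < n) `|alpha j| by apply: sumr_ge0 => j _.
  have K0 : 0 < K by rewrite /K; lra.
  have aK j : `|alpha j| <= K.
    rewrite /K (bigD1 j) //=; have : 0 <= \sum_(i < n | i != j) `|alpha i|.
      by apply: sumr_ge0 => i _.
    lra.
  pose e := d / (2 * K).
  have e0 : 0 < e by rewrite /e divr_gt0 // mulr_gt0.
  have eK : e * K = d / 2.
    by rewrite /e; field; rewrite gt_eqF.
  pose m j := minr (Lm lam (c j) (c j + e)) (Lm lam (c j - e) (c j)).
  pose m0 := \big[minr/1]_(j < n) m j.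
  have m00 : 0 < m0.
    apply/bigmin_gtP; split => // j _; rewrite lt_min.
    by rewrite !(@Lm_gt0 _ _ Hlam) //; lra.
  pose t := m0 / K.
  have t0 : 0 < t by rewrite /t divr_gt0.
  have tm j : t * `|alpha j| <= m j.
    have hm : m0 <= m j by exact: bigmin_le.
    apply: le_trans hm; apply: (@le_trans _ _ (t * K)).
      by rewrite ler_wpM2l // ltW.
    by rewrite /t mulfVK ?gt_eqF.
  have tmR j : t * `|alpha j| <= Lm lam (c j) (c j + e).
    by apply: le_trans (tm j) _; rewrite /m ge_min lexx.
  have tmL j : t * `|alpha j| <= Lm lam (c j - e) (c j).
    by apply: le_trans (tm j) _; rewrite /m ge_min lexx orbT.
  have hq j := @exists_q _ _ Hlam (c j) (alpha j) t e e0 (ltW t0) (tmR j) (tmL j).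
  have [qf Hq] := boolp.choice hq.
  have := H3 n ix ixinj (fun _ => g0) qf c (fun _ => Cg0) Hfin.
  have Hq1 j : p (ix j) = +oo%E -> qf j <= c j.
    by move=> /Hp h; case: (Hq j) => + _ _; apply.
  have Hq2 j : p (ix j) = -oo%E -> c j <= qf j.
    by move=> /Hn h; case: (Hq j) => _ + _; apply.
  move=> /(_ Hq1 Hq2).
  apply/negP; rewrite -ltNge.
  apply: (@lt_le_trans _ _ (t * d / 2)%:E); first by rewrite lte_fin divr_gt0 // mulr_gt0.
  apply: le_ereal_inf_tmp => _ [w _ <-]; rewrite lee_fin Hg0.
  apply: (@le_trans _ _ (\sum_(j < n) ((- (e * t)) * `|alpha j| +
      (- t) * (alpha j * \1_(B (ix j)) w * (X (ix j) w - c j))))).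
    rewrite big_split /= -!mulr_sumr.
    have := ubr w; have : e * \sum_(j < n) `|alpha j| <= e * K.
      by apply: ler_wpM2l; [exact: ltW | rewrite /K lerDl].
    have dr : d = - r by [].
    nra.
  apply: ler_sum => j _.
  case: (Hq j) => _ _ /(_ (X (ix j) w)) hd.
  have h0 : 0 <= \1_(B (ix j)) w :> R by rewrite indicE ler0n.
  have h1 : \1_(B (ix j)) w <= 1 :> R by rewrite indicE lern1 leq_b1.
  have h2 : 0 <= e * (t * `|alpha j|).
    by apply: mulr_ge0; [exact: ltW | apply: mulr_ge0; [exact: ltW|exact: normr_ge0]].
  have P1 : 0 <= \1_(B (ix j)) w * ((score lam (X (ix j) w) (c j) -
     score lam (X (ix j) w) (qf j)) - (- (e * (t * `|alpha j|)) - t * alpha j * (X (ix j) w - c j))).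
    by apply: mulr_ge0 => //; rewrite subr_ge0.
  have P2 : 0 <= (1 - \1_(B (ix j)) w) * (e * (t * `|alpha j|)).
    by apply: mulr_ge0 => //; rewrite subr_ge0.
  lra.
Qed.
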